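(* Assume each $L_r:Lip_d(I)\to Lip_d(I)$ ($r\in\mathbb{N}$) is linear and that there is a linear operator $L$ on $Lip_d(I)$ with $\|Lf\|_\infty=\sup_{r\in\mathbb{N}}\|L_rf\|_\infty$ for all $f\in Lip_d(I)$. Then the non-stationary fractal operator $\mathfrak{F}^\alpha_b:Lip_d(I)\to C(I)$, $\mathfrak{F}^\alpha_b(f)=f^\alpha_b$, is relatively bounded with respect to $L$: for all $f\in Lip_d(I)$, $$\|\mathfrak{F}^\alpha_b(f)\|_\infty\le\frac{1}{1-\|\alpha\|_\infty}\|f\|_\infty+\frac{\|\alpha\|_\infty}{1-\|\alpha\|_\infty}\|Lf\|_\infty,$$ so the $L$-bound of $\mathfrak{F}^\alpha_b$ is at most $\frac{\|\alpha\|_\infty}{1-\|\alpha\|_\infty}$.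
   Context: Setting: $I=[x_0,x_N]$ with partition $\Delta: x_0<x_1<\dots<x_N$, $I_i=[x_{i-1},x_i]$, $l_i:I\to I_i$ the increasing affine bijection $l_i(x)=\frac{x_i-x_{i-1}}{x_N-x_0}x+\frac{x_Nx_{i-1}-x_0x_i}{x_N-x_0}$, and $Q_i=l_i^{-1}$. Scaling functions $\alpha_{i,r}:I\to\mathbb{R}$ ($i=1,\dots,N$, $r\in\mathbb{N}$) are continuous with $\|\alpha\|_\infty:=\sup_{r}\max_i\|\alpha_{i,r}\|_\infty<1$. $Lip_d(I)$ ($0<d\le1$) is the space of real functions $g$ on $I$ with $\sup_{x\ne y}|g(x)-g(y)|/|x-y|^d<\infty$, regarded as a subset of $C(I)$ with the supremum norm. $L_r$ satisfy $(L_rg)(x_0)=g(x_0)$, $(L_rg)(x_N)=g(x_N)$ and $\sup_r\|L_r\|_\infty<\infty$ (operator norms w.r.t. the sup norm). An operator $\mathcal{T}_1$ is relatively bounded w.r.t. $\mathcal{T}_2$ if $\|\mathcal{T}_1u\|\le t_1\|u\|+t_2\|\mathcal{T}_2u\|$ for some $t_1,t_2\ge0$ and all $u$; the infimum of such $t_2$ is the $\mathcal{T}_2$-bound. Non-stationary $\alpha$-fractal function: for $f\in C(I)$ and base functions $b_r\in C(I)$ with $b_r(x_0)=f(x_0)$, $b_r(x_N)=f(x_N)$, $\sup_r\|b_r\|_\infty<\infty$, let $C_f(I)=\{g\in C(I):g(x_0)=f(x_0),g(x_N)=f(x_N)\}$ and $T^{\alpha_r}:C_f(I)\to C_f(I)$,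 $(T^{\alpha_r}g)(x)=f(x)+\alpha_{i,r}(Q_i(x))(g-b_r)(Q_i(x))$ for $x\in I_i$. For every $g\in C_f(I)$, $T^{\alpha_1}\circ\cdots\circ T^{\alpha_r}g$ converges uniformly to a function independent of $g$; this is the non-stationary $\alpha$-fractal function. $f^\alpha_b$ denotes it for $f\in Lip_d(I)$ with $b_r=L_rf$. *)

(* Defs.v *)
From Stdlib Require Import Reals Lra.
From Coquelicot Require Import Coquelicot.
Open Scope R_scope.

(* The interval I = [a,b] is represented by its endpoints; functions on I
   are functions R -> R of which only the values on I matter. *)

Definition supnorm (a b : R) (g : R -> R) : R :=
  real (Lub_Rbar (fun y => exists x, a <= x <= b /\ y = Rabs (g x))).

Definition cont_on (a b : R) (g : R -> R) : Prop :=
  forall x, a <= x <= b -> forall eps, 0 < eps ->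
    exists delta, 0 < delta /\
      forall y, a <= y <= b -> Rabs (y - x) < delta -> Rabs (g y - g x) < eps.

Definition Lip (a b d : R) (g : R -> R) : Prop :=
  exists K, forall x y, a <= x <= b -> a <= y <= b -> x <> y ->
    Rabs (g x - g y) / Rpower (Rabs (x - y)) d <= K.

(* Q_i = l_i^{-1}, with
   l_i(x) = (x_i - x_{i-1})/(x_N - x_0) x + (x_N x_{i-1} - x_0 x_i)/(x_N - x_0). *)
Definition Qmap (xs : nat -> R) (N i : nat) (y : R) : R :=
  ((xs N - xs O) * y - (xs N * xs (i - 1)%nat - xs O * xs i)) / (xs i - xs (i - 1)%nat).

(* index i in {1..N} of a subinterval I_i = [x_{i-1}, x_i] containing x:
   the smallest i with x <= x_i (N if none). *)
Fixpoint idx_aux (xs : nat -> R) (i fuel : nat) (x : R) : nat :=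
  match fuel with
  | O => i
  | S f => if Rle_dec x (xs i) then i else idx_aux xs (S i) f x
  end.
Definition idx (xs : nat -> R) (N : nat) (x : R) : nat := idx_aux xs 1 (N - 1) x.

(* (T^{alpha_r} g)(x) = f(x) + alpha_{i,r}(Q_i x) (g - b_r)(Q_i x), x in I_i.
   (At the nodes both adjacent formulas agree for g in C_f(I).) *)
Definition Tmap (xs : nat -> R) (N : nat) (alpha : nat -> nat -> R -> R)
  (f : R -> R) (b : nat -> R -> R) (r : nat) (g : R -> R) : R -> R :=
  fun x => let i := idx xs N x in
    f x + alpha i r (Qmap xs N i x) * (g (Qmap xs N i x) - b r (Qmap xs N i x)).

Fixpoint compT (xs : nat -> R) (N : nat) (alpha : nat -> nat -> R -> R)
  (f : R -> R) (b : nat -> R -> R) (k j : nat) (g : R -> R) : R -> R :=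
  match k with
  | O => g
  | S k' => Tmap xs N alpha f b j (compT xs N alpha f b k' (S j) g)
  end.

Definition alpha_norm (xs : nat -> R) (N : nat) (alpha : nat -> nat -> R -> R) : Rbar :=
  Lub_Rbar (fun y => exists i r, (1 <= i <= N)%nat /\ y = supnorm (xs O) (xs N) (alpha i r)).

Definition unif_cvg_on (a b : R) (u : nat -> R -> R) (phi : R -> R) : Prop :=
  forall eps, 0 < eps -> exists n0, forall n, (n0 <= n)%nat ->
    forall x, a <= x <= b -> Rabs (u n x - phi x) < eps.

(* Main.v *)
Require Import Defs.
From Stdlib Require Import Reals Lra Lia.
From Coquelicot Require Import Coquelicot.
Open Scope R_scope.

Definition bnd (a b : R) (h : R -> R) := exists B, forall x, a <= x <= b -> Rabs (h x) <= B.

Lemma clamp_prop a b x y : a <= b -> a <= x <= b ->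
  a <= Rmax a (Rmin b y) <= b /\ Rabs (Rmax a (Rmin b y) - x) <= Rabs (y - x).
Proof.
  intros Hab Hx. unfold Rmax, Rmin.
  repeat destruct Rle_dec; split; try lra; unfold Rabs; repeat destruct Rcase_abs; lra.
Qed.

Lemma cont_bnd a b h : a <= b -> cont_on a b h -> bnd a b h.
Proof.
  intros Hab Hc.
  set (k := fun x => Rabs (h (Rmax a (Rmin b x)))).
  destruct (continuity_ab_maj k a b Hab) as [M [HM _]].
  - intros c Hcr. unfold continuity_pt, continue_in, limit1_in, limit_in. simpl.
    intros eps Heps.
    assert (Hcc : Rmax a (Rmin b c) = c).
    { unfold Rmax, Rmin; repeat destruct Rle_dec; lra. }
    destruct (Hc c Hcr eps Heps) as [del [Hdel Hd]].
    exists del; split; auto. intros y [_ Hy]. unfold R_dist in *. unfold k.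
    rewrite Hcc.
    destruct (clamp_prop a b c y Hab Hcr) as [H1 H2].
    eapply Rle_lt_trans. apply Rabs_triang_inv2.
    apply Hd; auto. lra.
  - exists (k M). intros x Hx. specialize (HM x Hx). unfold k in HM.
    replace (Rmax a (Rmin b x)) with x in HM; auto.
    unfold Rmax, Rmin; repeat destruct Rle_dec; lra.
Qed.

Lemma Rpower_gt0 x y : 0 < Rpower x y.
Proof. unfold Rpower. apply exp_pos. Qed.

Lemma lip_bnd a b d h : a <= b -> 0 < d -> Lip a b d h -> bnd a b h.
Proof.
  intros Hab Hd [K HK].
  exists (Rabs (h a) + Rabs K * Rpower (b - a) d).
  intros x Hx.
  assert (HP := Rpower_gt0 (b - a) d).
  destruct (Req_dec x a) as [->|Hne].
  - assert (0 <= Rabs K) by apply Rabs_pos. nra.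
  - assert (Hxa : a < x) by lra.
    specialize (HK x a Hx (conj (Rle_refl a) Hab) Hne).
    rewrite (Rabs_right (x - a)) in HK by lra.
    assert (HP2 := Rpower_gt0 (x - a) d).
    assert (HPP : Rpower (x - a) d <= Rpower (b - a) d)
      by (apply Rle_Rpower_l; lra).
    assert (Hm : Rabs (h x - h a) <= K * Rpower (x - a) d).
    { unfold Rdiv in HK.
      apply (Rmult_le_compat_r (Rpower (x - a) d)) in HK; [|lra].
      rewrite Rmult_assoc, Rinv_l in HK by lra. lra. }
    assert (K <= Rabs K) by apply RRle_abs.
    assert (0 <= Rabs K) by apply Rabs_pos.
    assert (Rabs (h x) <= Rabs (h a) + Rabs (h x - h a)).
    { replace (h x) with (h a + (h x - h a)) at 1 by ring. apply Rabs_triang. }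
    nra.
Qed.

Lemma supnorm_ub a b h x : bnd a b h -> a <= x <= b -> Rabs (h x) <= supnorm a b h.
Proof.
  intros [B HB] Hx. unfold supnorm.
  set (S := fun y => exists x, a <= x <= b /\ y = Rabs (h x)).
  destruct (Lub_Rbar_correct S) as [Hub Hl].
  assert (HS : S (Rabs (h x))) by (exists x; auto).
  assert (HB' : is_ub_Rbar S B).
  { intros y [z [Hz ->]]. simpl. auto. }
  destruct (Lub_Rbar S) as [l| |] eqn:E.
  - specialize (Hub _ HS). simpl in Hub. simpl. auto.
  - specialize (Hl _ HB'). simpl in Hl. contradiction.
  - specialize (Hub _ HS). simpl in Hub. contradiction.
Qed.

Lemma supnorm_le a b h B : (forall x, a <= x <= b -> Rabs (h x) <= B) -> 0 <= B ->
  supnorm a b h <= B.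
Proof.
  intros HB HB0. unfold supnorm.
  set (S := fun y => exists x, a <= x <= b /\ y = Rabs (h x)).
  destruct (Lub_Rbar_correct S) as [Hub Hl].
  assert (HB' : is_ub_Rbar S B).
  { intros y [z [Hz ->]]. simpl. auto. }
  specialize (Hl _ HB').
  destruct (Lub_Rbar S) as [l| |] eqn:E; simpl in *; auto; contradiction.
Qed.

Lemma supnorm_nonneg a b h : a <= b -> 0 <= supnorm a b h.
Proof.
  intros Hab. unfold supnorm.
  set (S := fun y => exists x, a <= x <= b /\ y = Rabs (h x)).
  destruct (Lub_Rbar_correct S) as [Hub Hl].
  assert (HS : S (Rabs (h a))) by (exists a; split; [lra|auto]).
  specialize (Hub _ HS).
  destruct (Lub_Rbar S) as [l| |] eqn:E; simpl in *; try lra.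
  assert (0 <= Rabs (h a)) by apply Rabs_pos. lra.
Qed.

Lemma xs_mono (xs : nat -> R) N : (forall i, (i < N)%nat -> xs i < xs (S i)) ->
  forall m n, (m <= n <= N)%nat -> xs m <= xs n.
Proof.
  intros H m n Hmn. induction n.
  - assert (m = 0)%nat by lia. subst; lra.
  - destruct (Nat.eq_dec m (S n)) as [->|Hne]; [lra|].
    assert (xs n < xs (S n)) by (apply H; lia).
    assert (xs m <= xs n) by (apply IHn; lia). lra.
Qed.

Lemma idx_aux_prop (xs : nat -> R) N x : forall fuel i, (1 <= i)%nat -> (i + fuel = N)%nat ->
  xs (i - 1)%nat <= x -> x <= xs N ->
  let k := idx_aux xs i fuel x in (1 <= k <= N)%nat /\ xs (k - 1)%nat <= x <= xs k.
Proof.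
  induction fuel; intros i Hi HiN Hl Hu; simpl.
  - assert (i = N) by lia. subst i. split; [lia|lra].
  - destruct (Rle_dec x (xs i)).
    + split; [lia|lra].
    + apply IHfuel; try lia. replace (S i - 1)%nat with i by lia. apply Rnot_le_lt in n. lra. auto.
Qed.

Lemma alpha_facts (N : nat) (xs : nat -> R) (alpha : nat -> nat -> R -> R) :
  (1 <= N)%nat -> xs O <= xs N -> Rbar_lt (alpha_norm xs N alpha) 1 ->
  exists a, alpha_norm xs N alpha = Finite a /\ 0 <= a /\ a < 1 /\
    forall i r, (1 <= i <= N)%nat -> supnorm (xs O) (xs N) (alpha i r) <= a.
Proof.
  intros HN Hab H. unfold alpha_norm in *.
  set (S := fun y => exists i r, (1 <= i <= N)%nat /\ y = supnorm (xs O) (xs N) (alpha i r)) in *.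
  destruct (Lub_Rbar_correct S) as [Hub Hl].
  assert (HS : S (supnorm (xs O) (xs N) (alpha 1%nat 0%nat))).
  { exists 1%nat, 0%nat; split; auto; lia. }
  assert (Hub1 := Hub _ HS).
  destruct (Lub_Rbar S) as [l| |] eqn:E; simpl in *; try contradiction.
  exists l. split; auto. split.
  { assert (H0 := supnorm_nonneg (xs O) (xs N) (alpha 1%nat 0%nat) Hab). lra. }
  split; auto.
  intros i r Hi. assert (HS' : S (supnorm (xs O) (xs N) (alpha i r))) by (exists i, r; auto).
  specialize (Hub _ HS'). simpl in Hub. auto.
Qed.
Lemma Qmap_in (xs : nat -> R) N i x : (forall j, (j < N)%nat -> xs j < xs (S j)) ->
  (1 <= i <= N)%nat -> xs (i - 1)%nat <= x <= xs i ->
  xs O <= Qmap xs N i x <= xs N.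
Proof.
  intros Hm Hi Hx.
  assert (Hpq : xs (i - 1)%nat < xs i) by (replace i with (S (i - 1)) at 2 by lia; apply Hm; lia).
  assert (H0 : xs O <= xs (i - 1)%nat) by (apply (xs_mono xs N Hm); lia).
  assert (H1 : xs i <= xs N) by (apply (xs_mono xs N Hm); lia).
  set (p := xs (i - 1)%nat) in *. set (q := xs i) in *.
  set (t := (x - p) / (q - p)).
  assert (Ht : t * (q - p) = x - p) by (unfold t; field; lra).
  assert (HQ : Qmap xs N i x = xs O + (xs N - xs O) * t).
  { unfold Qmap, t. fold p q. field. lra. }
  rewrite HQ.
  assert (0 <= t) by nra. assert (t <= 1) by nra.
  split; nra.
Qed.

Theorem mainTheorem7
  (N : nat) (xs : nat -> R) (d : R)
  (alpha : nat -> nat -> R -> R)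
  (Lr : nat -> (R -> R) -> (R -> R)) (L : (R -> R) -> (R -> R)) :
  (1 <= N)%nat ->
  (forall i, (i < N)%nat -> xs i < xs (S i)) ->
  0 < d <= 1 ->
  (forall i r, (1 <= i <= N)%nat -> cont_on (xs O) (xs N) (alpha i r)) ->
  Rbar_lt (alpha_norm xs N alpha) 1 ->
  (* each L_r : Lip_d(I) -> Lip_d(I) is linear *)
  (forall r f, Lip (xs O) (xs N) d f -> Lip (xs O) (xs N) d (Lr r f)) ->
  (forall r f g, Lip (xs O) (xs N) d f -> Lip (xs O) (xs N) d g ->
     forall x, xs O <= x <= xs N -> Lr r (fun t => f t + g t) x = Lr r f x + Lr r g x) ->
  (forall r c f, Lip (xs O) (xs N) d f ->
     forall x, xs O <= x <= xs N -> Lr r (fun t => c * f t) x = c * Lr r f x) ->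
  (* endpoint interpolation *)
  (forall r f, Lip (xs O) (xs N) d f ->
     Lr r f (xs O) = f (xs O) /\ Lr r f (xs N) = f (xs N)) ->
  (* sup_r ||L_r||_oo < oo *)
  (exists M, forall r f, Lip (xs O) (xs N) d f ->
     supnorm (xs O) (xs N) (Lr r f) <= M * supnorm (xs O) (xs N) f) ->
  (* L : Lip_d(I) -> Lip_d(I) linear with ||L f|| = sup_r ||L_r f|| *)
  (forall f, Lip (xs O) (xs N) d f -> Lip (xs O) (xs N) d (L f)) ->
  (forall f g, Lip (xs O) (xs N) d f -> Lip (xs O) (xs N) d g ->
     forall x, xs O <= x <= xs N -> L (fun t => f t + g t) x = L f x + L g x) ->
  (forall c f, Lip (xs O) (xs N) d f ->
     forall x, xs O <= x <= xs N -> L (fun t => c * f t) x = c * L f x) ->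
  (forall f, Lip (xs O) (xs N) d f ->
     Finite (supnorm (xs O) (xs N) (L f)) =
     Lub_Rbar (fun y => exists r, y = supnorm (xs O) (xs N) (Lr r f))) ->
  (* conclusion: for f in Lip_d(I), f^alpha_b (the uniform limit of
     T^{alpha_1} o ... o T^{alpha_r} g, g in C_f(I), with b_r = L_r f) satisfies *)
  forall (f g phi : R -> R),
    Lip (xs O) (xs N) d f ->
    cont_on (xs O) (xs N) g -> g (xs O) = f (xs O) -> g (xs N) = f (xs N) ->
    unif_cvg_on (xs O) (xs N) (fun r => compT xs N alpha f (fun r => Lr r f) r O g) phi ->
    let a := real (alpha_norm xs N alpha) in
    supnorm (xs O) (xs N) phi <=
      1 / (1 - a) * supnorm (xs O) (xs N) f + a / (1 - a) * supnorm (xs O) (xs N) (L f).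
Proof.
  intros HN Hm Hd Hal Han HLr _ _ _ _ _ _ _ HLsup f g phi Hf Hg _ _ Hcv.
  cbv zeta.
  assert (Hab : xs O <= xs N) by (apply (xs_mono xs N Hm); lia).
  destruct (alpha_facts N xs alpha HN Hab Han) as [a [Ha [Ha0 [Ha1 Hsa]]]].
  rewrite Ha. simpl real.
  set (F := supnorm (xs O) (xs N) f).
  set (B := supnorm (xs O) (xs N) (L f)).
  assert (HF0 : 0 <= F) by apply (supnorm_nonneg _ _ _ Hab).
  assert (HB0 : 0 <= B) by apply (supnorm_nonneg _ _ _ Hab).
  assert (HFx : forall x, xs O <= x <= xs N -> Rabs (f x) <= F).
  { intros x Hx. apply supnorm_ub; auto. apply (lip_bnd _ _ d); auto; lra. }
  assert (HBx : forall r y, xs O <= y <= xs N -> Rabs (Lr r f y) <= B).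
  { intros r y Hy. eapply Rle_trans.
    apply (supnorm_ub (xs O) (xs N) (Lr r f)); auto. apply (lip_bnd _ _ d); [lra|lra|apply HLr; exact Hf].
    set (S := fun y => exists r, y = supnorm (xs O) (xs N) (Lr r f)).
    destruct (Lub_Rbar_correct S) as [Hub _].
    assert (HS : S (supnorm (xs O) (xs N) (Lr r f))) by (exists r; auto).
    specialize (Hub _ HS). unfold S in Hub. rewrite <- (HLsup f Hf) in Hub. simpl in Hub. exact Hub. }
  assert (Hax : forall i r y, (1 <= i <= N)%nat -> xs O <= y <= xs N -> Rabs (alpha i r y) <= a).
  { intros i r y Hi Hy. eapply Rle_trans; [|apply (Hsa i r Hi)].
    apply supnorm_ub; auto. apply cont_bnd; auto. }
  assert (HT : forall r h H, (forall y, xs O <= y <= xs N -> Rabs (h y) <= H) ->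
    forall x, xs O <= x <= xs N ->
      Rabs (Tmap xs N alpha f (fun r => Lr r f) r h x) <= F + a * (H + B)).
  { intros r h H Hh x Hx. unfold Tmap.
    assert (Hi : (1 <= idx xs N x <= N)%nat /\ xs (idx xs N x - 1)%nat <= x <= xs (idx xs N x)).
    { apply idx_aux_prop; try lia. simpl. lra. lra. }
    set (i := idx xs N x) in *. destruct Hi as [Hi Hix].
    assert (HQ := Qmap_in xs N i x Hm Hi Hix).
    set (y := Qmap xs N i x) in *.
    assert (H1 := HFx x Hx). assert (H2 := Hh y HQ). assert (H3 := HBx r y HQ).
    assert (H4 := Hax i r y Hi HQ).
    eapply Rle_trans. apply Rabs_triang. rewrite Rabs_mult.
    assert (H5 : Rabs (h y - Lr r f y) <= H + B).
    { eapply Rle_trans. apply Rabs_triang. rewrite Rabs_Ropp. lra. }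
    assert (0 <= Rabs (alpha i r y)) by apply Rabs_pos.
    assert (0 <= Rabs (h y - Lr r f y)) by apply Rabs_pos.
    apply Rplus_le_compat; auto. apply Rmult_le_compat; auto. }
  destruct (cont_bnd _ _ _ Hab Hg) as [G HG].
  assert (HG0 : 0 <= G) by (eapply Rle_trans; [apply Rabs_pos|apply (HG (xs O))]; lra).
  set (C := F + a * B).
  assert (HC0 : 0 <= C / (1 - a)).
  { unfold C. apply Rdiv_le_0_compat; nra. }
  assert (Hit : forall k j x, xs O <= x <= xs N ->
    Rabs (compT xs N alpha f (fun r => Lr r f) k j g x) <= C / (1 - a) + a ^ k * G).
  { induction k; intros j x Hx; simpl.
    - specialize (HG x Hx). lra.
    - eapply Rle_trans. apply HT; [|exact Hx]. intros y Hy. apply IHk. exact Hy.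
      right. unfold C. field. lra. }
  replace (1 / (1 - a) * F + a / (1 - a) * B) with (C / (1 - a)) by (unfold C; field; lra).
  apply supnorm_le; [|exact HC0].
  intros x Hx. apply Rle_plus_epsilon. intros eps Heps.
  destruct (Hcv (eps / 2) ltac:(lra)) as [n0 Hn0].
  assert (Hra : Rabs a < 1) by (rewrite Rabs_right; lra).
  destruct (pow_lt_1_zero a Hra (eps / 2 / (G + 1)) ltac:(apply Rdiv_lt_0_compat; lra)) as [n1 Hn1].
  set (n := Nat.max n0 n1).
  specialize (Hn0 n ltac:(lia) x Hx). specialize (Hn1 n ltac:(lia)).
  specialize (Hit n O x Hx).
  assert (Hp : 0 <= a ^ n) by (apply pow_le; lra).
  rewrite Rabs_right in Hn1 by lra.
  assert (Hq : a ^ n * (G + 1) < eps / 2).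
  { apply (Rmult_lt_compat_r (G + 1)) in Hn1; [|lra].
    replace (eps / 2 / (G + 1) * (G + 1)) with (eps / 2) in Hn1 by (field; lra). exact Hn1. }
  set (u := compT xs N alpha f (fun r => Lr r f) n 0 g x) in *.
  assert (Rabs (phi x) <= Rabs u + Rabs (u - phi x)).
  { replace (phi x) with (u - (u - phi x)) at 1 by ring.
    eapply Rle_trans. apply Rabs_triang. rewrite Rabs_Ropp. lra. }
  nra.
Qed.
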